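(* Let $(S,A,P,R,\Gamma)$ be a finite MDP, $\mathcal{C}=\mathring{\mathcal{C}}\cup\partial\mathcal{C}$ a cluster, and $\pi_{\mathcal{C}}$ a policy on $\mathcal{C}$ for which $\partial\mathcal{C}$ is $\pi_{\mathcal{C}}$-reachable; let $a\in\widetilde{A}$ be the coarse action ''execute $\pi_{\mathcal{C}}$ in $\mathcal{C}$'' and $(X_t)_{t\ge0}$ the associated controlled Markov chain with transition matrix $P^{\pi_{\mathcal{C}}}_{\mathcal{C}}$. The coarse discount factors are characterized by \[ \widetilde{\Gamma}(s,a,s')=\mathbb{E}_s[\Delta_0^{T_1}\mid X_{T_1}=s'],\qquad(s,s')\in\operatorname{supp}_a(\widetilde{P}), \] and, letting $H_{s,s'}:=\widetilde{\Gamma}(s,a,s')$ (and $H_{s,s'}=\mathbb{E}_s[\Delta_0^{T_0}\mid X_{T_0}=s']$ for interior $s$), they may be computed by finding the minimal non-negative solution $H$ of the linear system \[ H_{s,s'}=\sum_{s''\in\mathring{\mathcal{C}}\cap\mathcal{C}'_{s'},\,a'\in A}P_{h_{s'}}(s,a',s'')\Gamma(s,a',s'')H_{s'',s'}+\sum_{a'\in A}P_{h_{s'}}(s,a',s')\Gamma(s,a',s'),\quad s\in\mathring{\mathcal{C}}\cap\mathcal{C}'_{s'}, \] \[ H_{s,s'}=\sum_{s''\in\mathring{\mathcal{C}}\cap\mathcal{C}'_{s'},\,a'\in A}P_{\tilde h_{s'}}(s,a',s'')\Gamma(s,a',s'')H_{s'',s'}+\sum_{a'\in A}P_{\tilde h_{s'}}(s,a',s')\Gamma(s,a',s'),\quad(s,s')\in\operatorname{supp}_a(\widetilde{P}).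 \]
   Context: A finite MDP $(S,A,P,R,\Gamma)$ has finite statespace $S$, finite action set $A$, transition tensor $P(s,a,s')$, bounded rewards $R$, discount factors $\Gamma(s,a,s')\in(0,1)$. A policy gives distributions $\pi(s,\cdot)$ on $A$. With bottleneck set $\mathcal{B}$, a cluster $\mathcal{C}$ is a disjoint union of interior $\mathring{\mathcal{C}}\subseteq S\setminus\mathcal{B}$ and boundary $\partial\mathcal{C}\subseteq\mathcal{B}$. The restriction is $P_{\mathcal{C}}(s,a,s')=P(s,a,s')$ for $s\ne s'\in\mathcal{C}$, $P_{\mathcal{C}}(s,a,s)=P(s,a,s)+\sum_{s''\notin\mathcal{C}}P(s,a,s'')$; $P^\pi_{\mathcal{C}}(s,s')=\sum_aP_{\mathcal{C}}(s,a,s')\pi(s,a)$; $\partial\mathcal{C}$ is $\pi$-reachable if reached in finitely many steps of $P^\pi_{\mathcal{C}}$ from every state in $\mathcal{C}$. The chain: $a_{t+1}\sim\pi_{\mathcal{C}}(X_t)$, $X_{t+1}\sim P_{\mathcal{C}}(X_t,a_{t+1},\cdot)$; $\mathbb{E}_s,\mathbb{P}_s$ condition on $X_0=s$. Hitting times $T_0=\inf\{t\ge0:X_t\in\partial\mathcal{C}\}$, $T_m=\inf\{t>T_{m-1}:X_t\in\partial\mathcal{C}\}$. For stopping times $0\le T<T'<\infty$, $\Delta_T^{T'}=\prod_{t=T}^{T'-1}\Gamma(X_t,a_{t+1},X_{t+1})$. $\widetilde{P}(s,a,s')=\mathbb{P}_s(X_{T_1}=s')$ for $s,s'\in\partial\mathcal{C}$;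 $\operatorname{supp}_a(\widetilde{P})=\{(s,s')\in\partial\mathcal{C}^2:\widetilde{P}(s,a,s')>0\}$. For $s'\in\partial\mathcal{C}$, $h_{s'}(s)=\mathbb{P}_s(X_{T_0}=s')$ is the minimal non-negative function with $h_{s'}(s)=\delta_{s,s'}$ on $\partial\mathcal{C}$ and $h_{s'}(s)=P^{\pi_{\mathcal{C}}}_{\mathcal{C}}(s,s')+\sum_{s''\in\mathring{\mathcal{C}}}P^{\pi_{\mathcal{C}}}_{\mathcal{C}}(s,s'')h_{s'}(s'')$ on $\mathring{\mathcal{C}}$. $\mathcal{C}'_{s'}=\{s\in\mathcal{C}:h_{s'}(s)>0\}$, $P_{h_{s'}}(s,a',s'')=P_{\mathcal{C}}(s,a',s'')\pi_{\mathcal{C}}(s,a')h_{s'}(s'')/h_{s'}(s)$ for $s\in\mathring{\mathcal{C}}\cap\mathcal{C}'_{s'}$, and $P_{\tilde h_{s'}}(s,a',s'')=P_{\mathcal{C}}(s,a',s'')\pi_{\mathcal{C}}(s,a')h_{s'}(s'')/\widetilde{P}(s,a,s')$ for $(s,s')\in\operatorname{supp}_a(\widetilde{P})$, with $a'\in A$, $s''\in\mathcal{C}'_{s'}$. *)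

(* Defs.v *)
From HB Require Import structures.
From mathcomp Require Import all_boot all_order all_algebra.
From mathcomp Require Import all_classical all_reals.
From mathcomp Require Import topology normedtype sequences.
Set Implicit Arguments. Unset Strict Implicit. Unset Printing Implicit Defensive.
Import Order.TTheory GRing.Theory Num.Theory numFieldNormedType.Exports.
Local Open Scope ring_scope.

Section MDP.
Variables (R : realType) (S A : finType).
Variables (P : S -> A -> S -> R) (Gam : S -> A -> S -> R) (pi : S -> A -> R).
Variables (Ci Cb : {set S}).

Definition inC (s : S) : bool := (s \in Ci) || (s \in Cb).

Definition PC (s : S) (a : A) (s' : S) : R :=
  if ~~ inC s' then 0
  else if s == s' then P s a s + \sum_(s'' | ~~ inC s'') P s a s''
  else P s a s'.

Definition PpiC (s s' : S) : R := \sum_(a : A) PC s a s' * pi s a.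

Fixpoint reachN (n : nat) (s : S) : bool :=
  if n is m.+1 then (s \in Cb) || [exists s'', (0 < PpiC s s'') && reachN m s'']
  else s \in Cb.

Definition pi_reachable : Prop :=
  forall s, inC s -> exists n, reachN n s.

(* One step (X_t, a_{t+1}, X_{t+1}) of the controlled chain: probability
   pi(X_t,a_{t+1}) P_C(X_t,a_{t+1},X_{t+1}), multiplied by the discount
   Gamma(X_t,a_{t+1},X_{t+1}) when [disc] is true. *)
Definition stepw (disc : bool) (x : S) (a : A) (y : S) : R :=
  pi x a * PC x a y * (if disc then Gam x a y else 1).

(* A trajectory of n+1 steps started at s is p : 'I_(n+1) -> A * S with
   p t = (a_{t+1}, X_{t+1}).  [prevst s p t] is X_t. *)
Definition prevst n (s : S) (p : {ffun 'I_n.+1 -> A * S}) (t : 'I_n.+1) : S :=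
  if val t is k.+1 then (p (inord k)).2 else s.

(* E_s[ Delta_0^{n+1} ; first visit to Cb after time 0 happens at time n+1
   and at state s' ]  (disc = true),  or the probability of that event
   (disc = false). *)
Definition firstHitW (disc : bool) (n : nat) (s s' : S) : R :=
  \sum_(p : {ffun 'I_n.+1 -> A * S} |
        [forall t : 'I_n.+1, (val t < n)%N ==> ((p t).2 \notin Cb)]
        && ((p ord_max).2 == s'))
    \prod_(t < n.+1) stepw disc (prevst s p t) (p t).1 (p t).2.

(* For s in Cb: E_s[Delta_0^{T_1} ; X_{T_1} = s'] ; for s in Ci the same
   expression is E_s[Delta_0^{T_0} ; X_{T_0} = s'] (since then T_0 >= 1). *)
(* infinite sums are limits of partial sums (all terms are non-negative) *)
Definition discHit (s s' : S) : R :=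
  limn (fun N => \sum_(n < N) firstHitW true n s s').
Definition probHit (s s' : S) : R :=
  limn (fun N => \sum_(n < N) firstHitW false n s s').

Definition Ptilde (s s' : S) : R := probHit s s'.

(* h_{s'}(s) = P_s(X_{T_0} = s') *)
Definition h (s' s : S) : R := if s \in Cb then (s == s')%:R else probHit s s'.

Definition suppPt (s s' : S) : bool := [&& s \in Cb, s' \in Cb & 0 < Ptilde s s'].

Definition Cprime (s' s : S) : bool := inC s && (0 < h s' s).

Definition Gtilde (s s' : S) : R := discHit s s' / Ptilde s s'.
Definition Hcond (s s' : S) : R :=
  if s \in Cb then Gtilde s s' else discHit s s' / h s' s.

Definition Ph (s' s : S) (a' : A) (s'' : S) : R :=
  PC s a' s'' * pi s a' * h s' s'' / h s' s.
Definition Pht (s' s : S) (a' : A) (s'' : S) : R :=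
  PC s a' s'' * pi s a' * h s' s'' / Ptilde s s'.

Definition sysDom (s s' : S) : bool :=
  (s' \in Cb) && (((s \in Ci) && Cprime s' s) || suppPt s s').

Definition sysRHS (K : S -> A -> S -> R) (H : S -> S -> R) (s s' : S) : R :=
  \sum_(s'' | (s'' \in Ci) && Cprime s' s'') \sum_(a' : A)
      K s a' s'' * Gam s a' s'' * H s'' s'
  + \sum_(a' : A) K s a' s' * Gam s a' s'.

Definition solvesSys (H : S -> S -> R) : Prop :=
  (forall s s', s' \in Cb -> s \in Ci -> Cprime s' s ->
     H s s' = sysRHS (Ph s') H s s') /\
  (forall s s', suppPt s s' -> H s s' = sysRHS (Pht s') H s s').

Definition minNonnegSol (H : S -> S -> R) : Prop :=
  solvesSys H /\ (forall s s', sysDom s s' -> 0 <= H s s') /\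
  (forall G : S -> S -> R, solvesSys G -> (forall s s', sysDom s s' -> 0 <= G s s') ->
     forall s s', sysDom s s' -> H s s' <= G s s').

End MDP.

(* Main.v *)
Require Import Defs.
From HB Require Import structures.
From mathcomp Require Import all_boot all_order all_algebra.
From mathcomp Require Import all_classical all_reals.
From mathcomp Require Import topology normedtype sequences.
From mathcomp Require Import ring lra.
Import Order.TTheory GRing.Theory Num.Theory numFieldNormedType.Exports.
Local Open Scope classical_set_scope.
Local Open Scope ring_scope.

Section Fcons.
Variable T : finType.

Definition fcons {n} (x : T) (q : {ffun 'I_n -> T}) : {ffun 'I_n.+1 -> T} :=
  [ffun t => if unlift ord0 t is Some t' then q t' else x].

Lemma fcons0 n x (q : {ffun 'I_n -> T}) : fcons x q ord0 = x.
Proof. by rewrite /fcons ffunE unlift_none. Qed.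

Lemma fconsS n x (q : {ffun 'I_n -> T}) t : fcons x q (lift ord0 t) = q t.
Proof. by rewrite /fcons ffunE liftK. Qed.

Definition fsplit {n} (p : {ffun 'I_n.+1 -> T}) : T * {ffun 'I_n -> T} :=
  (p ord0, [ffun t => p (lift ord0 t)]).

Lemma sum_fcons (V : nmodType) n (F : {ffun 'I_n.+1 -> T} -> V) :
  \sum_p F p = \sum_x \sum_(q : {ffun 'I_n -> T}) F (fcons x q).
Proof.
rewrite pair_big /=.
rewrite (reindex (fun y : T * {ffun 'I_n -> T} => fcons y.1 y.2)) //=.
exists (@fsplit n) => [[x q] _|p _] /=.
  rewrite /fsplit fcons0; congr pair; apply/ffunP => t; by rewrite ffunE fconsS.
apply/ffunP => t; rewrite /fsplit /=.
case: (unliftP ord0 t) => [t'|] ->; first by rewrite fconsS ffunE.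
by rewrite fcons0.
Qed.
End Fcons.
Arguments fcons {T n}. Arguments fsplit {T n}.

Lemma forall_liftl n (Q : pred 'I_n.+1) :
  [forall t, Q t] = Q ord0 && [forall t : 'I_n, Q (lift ord0 t)].
Proof.
apply/forallP/andP => [H|[H0 /forallP H]]; first by split; [|apply/forallP].
by move=> t; case: (unliftP ord0 t) => [t'|] ->.
Qed.

Lemma sum_ffun0 (V : nmodType) (T : finType) (G : {ffun 'I_0 -> T} -> V) c :
  (forall q, G q = c) -> \sum_q G q = c.
Proof.
move=> HG; rewrite (eq_bigr (fun _ => c)) // sumr_const card_ffun card_ord expn0.
by rewrite mulr1n.
Qed.

Lemma liftval n (t : 'I_n) : val (lift ord0 t) = t.+1.
Proof. exact: lift0. Qed.

Section MDP.
Variables (R : realType) (S A : finType).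
Variables (P : S -> A -> S -> R) (Gam : S -> A -> S -> R) (pi : S -> A -> R).
Variables (Ci Cb : {set S}).

Local Notation w := (stepw P Gam pi Ci Cb).
Local Notation F := (firstHitW P Gam pi Ci Cb).

Lemma prevst_fcons n s x (q : {ffun 'I_n.+1 -> A * S}) t :
  prevst s (fcons x q) (lift ord0 t) = prevst x.2 q t.
Proof.
rewrite /prevst; have -> : val (lift ord0 t) = t.+1 := lift0 t; case: t => [[|k] Hk] /=.
  have ->: inord 0 = ord0 :> 'I_n.+2 by apply/val_inj; rewrite /= inordK.
  by rewrite fcons0.
have ->: (inord k.+1 : 'I_n.+2) = lift ord0 (inord k : 'I_n.+1).
  by apply/ord_inj; rewrite lift0 !inordK // ltnW.
by rewrite fconsS.
Qed.

Lemma F0 d s s' : F d 0 s s' = \sum_a w d s a s'.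
Proof.
rewrite /firstHitW big_mkcond sum_fcons /=.
have -> : \sum_a w d s a s' = \sum_a \sum_(y : S) (if y == s' then w d s a y else 0).
  by apply: eq_bigr => a _; rewrite -big_mkcond /= big_pred1_eq.
rewrite [RHS]pair_big /=; apply: eq_bigr => [[a y]] _ /=.
apply: sum_ffun0 => q; rewrite (ord1 ord_max) fcons0 /=.
have -> : [forall t : 'I_1, (val t < 0)%N ==> ((fcons (a, y) q t).2 \notin Cb)].
  by apply/forallP => t; rewrite ltn0.
by rewrite big_ord1 fcons0.
Qed.

Lemma FS d n s s' : F d n.+1 s s' =
  \sum_a \sum_(y | y \notin Cb) w d s a y * F d n y s'.
Proof.
rewrite /firstHitW big_mkcond sum_fcons /=.
rewrite [RHS](eq_bigr (fun a => \sum_(y : S) \sum_(q : {ffun 'I_n.+1 -> A * S})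
   if (y \notin Cb) && ([forall t : 'I_n.+1, (val t < n)%N ==> ((q t).2 \notin Cb)]
        && ((q ord_max).2 == s'))
   then w d s a y * \prod_(t < n.+1) w d (prevst y q t) (q t).1 (q t).2 else 0)).
  rewrite [RHS]pair_big /=; apply: eq_bigr => [[a y]] _ /=; apply: eq_bigr => q _.
  have -> : (ord_max : 'I_n.+2) = lift ord0 ord_max by apply/ord_inj; rewrite lift0.
  rewrite fconsS forall_liftl fcons0.
  under eq_forallb => t do rewrite fconsS liftval ltnS.
  rewrite /=.
  rewrite big_ord_recl fcons0 /=.
  under eq_bigr => t _ do rewrite prevst_fcons fconsS.
  by rewrite andbA.
move=> a _; rewrite big_mkcond /=; apply: eq_bigr => y _.
case: (y \notin Cb) => /=; last by rewrite big1.
by rewrite big_distrr /= big_mkcond; apply: eq_bigr => q _; case: ifP; rewrite ?mulr0.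
Qed.

Hypothesis HP0 : forall s a s', 0 <= P s a s'.
Hypothesis HP1 : forall s a, \sum_(s' : S) P s a s' = 1.
Hypothesis HGam : forall s a s', 0 < Gam s a s' < 1.
Hypothesis Hpi0 : forall s a, inC Ci Cb s -> 0 <= pi s a.
Hypothesis Hpi1 : forall s, inC Ci Cb s -> \sum_(a : A) pi s a = 1.
Hypothesis HD : forall s, s \in Ci -> s \notin Cb.

Local Notation inC := (inC Ci Cb).
Local Notation PC := (PC P Ci Cb).

Lemma PC_ge0 s a y : 0 <= PC s a y.
Proof.
rewrite /Defs.PC; case: ifP => // _; case: ifP => _ //.
by apply: addr_ge0 => //; apply: sumr_ge0.
Qed.

Lemma PC_out s a y : ~~ inC y -> PC s a y = 0.
Proof. by rewrite /Defs.PC => ->. Qed.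

Lemma sumPC s a : inC s -> \sum_y PC s a y = 1.
Proof.
move=> Cs.
have E y : PC s a y = (if inC y then P s a y else 0) +
    (if y == s then \sum_(z | ~~ inC z) P s a z else 0).
  rewrite /Defs.PC; case: (boolP (inC y)) => Cy /=.
    case: eqP => [->|/eqP]; first by rewrite eqxx.
    by rewrite eq_sym => /negbTE ->; rewrite addr0.
  case: eqP => [ys|]; last by rewrite addr0.
  by move: Cy; rewrite ys Cs.
rewrite (eq_bigr _ (fun y _ => E y)) big_split /= -!big_mkcond big_pred1_eq /=.
by rewrite -(HP1 s a) [RHS](bigID inC) /=.
Qed.

Lemma w_ge0 d s a y : inC s -> 0 <= w d s a y.
Proof.
move=> Cs; rewrite /stepw; apply: mulr_ge0; first exact: mulr_ge0 (Hpi0 _ _ Cs) (PC_ge0 _ _ _).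
by case: d => //; case/andP: (HGam s a y) => /ltW.
Qed.

Lemma w_out d s a y : ~~ inC y -> w d s a y = 0.
Proof. by move=> Cy; rewrite /stepw PC_out // mulr0 mul0r. Qed.

Lemma wT_le s a y : inC s -> w true s a y <= w false s a y.
Proof.
move=> Cs; rewrite /stepw mulr1; apply: ler_piMr.
  exact: mulr_ge0 (Hpi0 _ _ Cs) (PC_ge0 _ _ _).
by case/andP: (HGam s a y) => _ /ltW.
Qed.

Lemma sumw s : inC s -> \sum_a \sum_y w false s a y = 1.
Proof.
move=> Cs; rewrite -(Hpi1 _ Cs); apply: eq_bigr => a _.
rewrite /stepw; under eq_bigr do rewrite mulr1.
by rewrite -big_distrr /= sumPC // mulr1.
Qed.

Lemma FS' d n s s' : F d n.+1 s s' = \sum_a \sum_(y in Ci) w d s a y * F d n y s'.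
Proof.
rewrite FS; apply: eq_bigr => a _; rewrite big_mkcond [RHS]big_mkcond; apply: eq_bigr => y _ /=.
case: (boolP (y \in Ci)) => yi; first by rewrite (HD _ yi).
case: ifP => // yb; rewrite w_out ?mul0r //.
by rewrite /Defs.inC (negbTE yi) /=.
Qed.

Lemma inCi y : y \in Ci -> inC y.
Proof. by rewrite /Defs.inC => ->. Qed.

Lemma F_ge0 d n s s' : inC s -> 0 <= F d n s s'.
Proof.
elim: n s => [|n IH] s Cs.
  by rewrite F0; apply: sumr_ge0 => a _; exact: w_ge0.
rewrite FS'; apply: sumr_ge0 => a _; apply: sumr_ge0 => y yi.
by apply: mulr_ge0; [exact: w_ge0 | apply: IH; exact: inCi].
Qed.

Lemma FT_le n s s' : inC s -> F true n s s' <= F false n s s'.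
Proof.
elim: n s => [|n IH] s Cs.
  by rewrite !F0; apply: ler_sum => a _; exact: wT_le.
rewrite !FS'; apply: ler_sum => a _; apply: ler_sum => y yi.
apply: ler_pM; [exact: w_ge0|apply: F_ge0; exact: inCi|exact: wT_le|].
by apply: IH; exact: inCi.
Qed.

Definition SN d N s s' := \sum_(n < N) F d n s s'.

Lemma SN_rec d N s s' : SN d N.+1 s s' =
  \sum_a w d s a s' + \sum_a \sum_(y in Ci) w d s a y * SN d N y s'.
Proof.
rewrite /SN big_ord_recl F0; congr (_ + _).
under eq_bigr => i _ do rewrite lift0 FS'.
rewrite exchange_big; apply: eq_bigr => a _; rewrite exchange_big.
by apply: eq_bigr => y _; rewrite big_distrr.
Qed.

Lemma SN_ge0 d N s s' : inC s -> 0 <= SN d N s s'.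
Proof. by move=> Cs; apply: sumr_ge0 => n _; exact: F_ge0. Qed.

Lemma Tot_le N s : inC s -> \sum_(s' in Cb) SN false N s s' <= 1.
Proof.
elim: N s => [|N IH] s Cs.
  by rewrite big1 ?ler01 // => s' _; rewrite /SN big_ord0.
under eq_bigr do rewrite SN_rec.
rewrite big_split /=.
apply: (@le_trans _ _ (\sum_a \sum_(y in Cb) w false s a y +
                        \sum_a \sum_(y in Ci) w false s a y)).
  apply: lerD; first by rewrite exchange_big.
  rewrite exchange_big; apply: ler_sum => a _; rewrite exchange_big /=.
  apply: ler_sum => y yi; rewrite -big_distrr /=; apply: ler_piMr.
    exact: w_ge0.
  by apply: IH; exact: inCi.
rewrite -big_split /= -(sumw _ Cs); apply: ler_sum => a _.
rewrite big_mkcond /= [X in _ + X]big_mkcond /= -big_split /=; apply: ler_sum => y _.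
case: (boolP (y \in Cb)) => yb; case: (boolP (y \in Ci)) => yi.
- by move: (HD _ yi); rewrite yb.
- by rewrite addr0.
- by rewrite add0r.
- by rewrite addr0; apply: w_ge0; rewrite /Defs.inC.
Qed.

Lemma SN_le1 N s s' : inC s -> s' \in Cb -> SN false N s s' <= 1.
Proof.
move=> Cs bs'; apply: le_trans (Tot_le N _ Cs).
rewrite (bigD1 s') //= lerDl; apply: sumr_ge0 => y _; exact: SN_ge0.
Qed.

Lemma SNT_le N s s' : inC s -> SN true N s s' <= SN false N s s'.
Proof. by move=> Cs; apply: ler_sum => n _; exact: FT_le. Qed.

Lemma SN_cvg d s s' : inC s -> s' \in Cb -> cvgn (fun N => SN d N s s').
Proof.
move=> Cs bs'; apply: nondecreasing_is_cvgn.
  apply/nondecreasing_seqP => N; rewrite /SN big_ord_recr /= lerDl; exact: F_ge0.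
exists 1 => _ [N _ <-]; case: d; last exact: SN_le1.
exact: le_trans (SNT_le N _ _ Cs) (SN_le1 N _ _ Cs bs').
Qed.

Lemma cvg_sumf (I : Type) (r : seq I) (Pr : pred I) (f : I -> nat -> R) (l : I -> R) :
  (forall i, Pr i -> (fun n => f i n) @ \oo --> l i) ->
  (fun n => \sum_(i <- r | Pr i) f i n) @ \oo --> \sum_(i <- r | Pr i) l i.
Proof. by move=> H; apply: cvg_big => //; exact: add_continuous. Qed.

Definition L d s s' := limn (fun N => SN d N s s').

Lemma L_rec d s s' : inC s -> s' \in Cb -> L d s s' =
  \sum_a w d s a s' + \sum_a \sum_(y in Ci) w d s a y * L d y s'.
Proof.
move=> Cs bs'.
have H1 : (fun N => SN d N.+1 s s') @ \oo --> L d s s'.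
  by rewrite (cvg_shiftS (fun N => SN d N s s')); exact: SN_cvg.
have H2 : (fun N => SN d N.+1 s s') @ \oo -->
    \sum_a w d s a s' + \sum_a \sum_(y in Ci) w d s a y * L d y s'.
  under eq_fun do rewrite SN_rec.
  apply: cvgD; first exact: cvg_cst.
  apply: cvg_sumf => a _; apply: cvg_sumf => y yi; apply: cvgMl_tmp.
  by apply: SN_cvg => //; exact: inCi.
exact: (cvg_unique _ H1 H2).
Qed.

Lemma L_ge0 d s s' : inC s -> s' \in Cb -> 0 <= L d s s'.
Proof.
move=> Cs bs'; apply: limr_ge; first exact: SN_cvg.
by apply: nearW => N; exact: SN_ge0.
Qed.

Lemma LT_le s s' : inC s -> s' \in Cb -> L true s s' <= L false s s'.
Proof.
move=> Cs bs'; apply: ler_lim; [exact: SN_cvg|exact: SN_cvg|].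
by apply: nearW => N; exact: SNT_le.
Qed.

Local Notation hh := (h P Gam pi Ci Cb).
Local Notation HH := (Hcond P Gam pi Ci Cb).

Lemma probE s s' : probHit P Gam pi Ci Cb s s' = L false s s'.
Proof. by []. Qed.

Lemma hE s' y : y \notin Cb -> hh s' y = L false y s'.
Proof. by rewrite /h => /negbTE ->. Qed.

Lemma hEb s' : hh s' s' = 1 -> True. Proof. by []. Qed.

Lemma HcondE s s' : HH s s' = L true s s' / L false s s'.
Proof. by rewrite /Hcond /h /Gtilde /Ptilde; case: (s \in Cb). Qed.

Lemma rhs_eq (K : S -> A -> S -> R) s s' : inC s -> s' \in Cb -> 0 < L false s s' ->
  (forall a y, K s a y = PC s a y * pi s a * hh s' y / L false s s') ->
  sysRHS P Gam pi Ci Cb K HH s s' = HH s s'.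
Proof.
move=> Cs bs' Dpos HK.
have Dn0 : L false s s' != 0 by rewrite gt_eqF.
rewrite HcondE (L_rec true _ _ Cs bs') mulrDl addrC /sysRHS; congr (_ + _).
  rewrite [in RHS]exchange_big [RHS]big_distrl /= [RHS](bigID (fun y => Cprime P Gam pi Ci Cb s' y)) /=.
  rewrite [X in _ = _ + X]big1 ?addr0; last first.
    move=> y /andP[yi]; rewrite /Cprime (inCi _ yi) /= hE ?HD // -leNgt => Lle.
    have L0 : L false y s' = 0 by apply/le_anti; rewrite Lle L_ge0 // inCi.
    have LT0 : L true y s' = 0.
      by apply/le_anti; rewrite L_ge0 ?inCi // andbT -L0 LT_le ?inCi.
    by rewrite big1 ?mul0r // => a _; rewrite LT0 mulr0.
  apply: eq_bigr => y /andP[yi]; rewrite /Cprime (inCi _ yi) /= hE ?HD // => Lpos.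
  have Ln0 : L false y s' != 0 by rewrite gt_eqF.
  rewrite big_distrl /=; apply: eq_bigr => a _.
  rewrite HK hE ?HD // HcondE /stepw /=; field.
  by rewrite Dn0 Ln0.
rewrite big_distrl /=; apply: eq_bigr => a _.
rewrite HK /h bs' eqxx /stepw /=; field.
exact: Dn0.
Qed.

Lemma max0_ge (I : finType) (Q : pred I) (f : I -> R) :
  0 <= \big[Order.max/0]_(i | Q i) f i.
Proof.
elim: (index_enum I) => [|i r IH]; rewrite ?big_nil ?big_cons //.
by case: ifP => _ //; rewrite le_max IH orbT.
Qed.

Lemma main : minNonnegSol P Gam pi Ci Cb HH.
Proof.
have Hsolve : solvesSys P Gam pi Ci Cb HH.
  split.
  - move=> s s' bs' si cp.
    have Cs := inCi _ si.
    have Lpos : 0 < L false s s' by move: cp; rewrite /Cprime Cs (hE s' s (HD s si)).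
    symmetry; apply: rhs_eq => // a y; by rewrite /Ph (hE s' s (HD s si)).
  - move=> s s' /and3P[bs bs' Ppos].
    symmetry; apply: rhs_eq => //.
    by rewrite /Defs.inC bs orbT.
have Hnn : forall s s', sysDom P Gam pi Ci Cb s s' -> 0 <= HH s s'.
  move=> s s' /andP[bs' Hor].
  have Cs : inC s.
    case/orP: Hor => [/andP[si _]|/and3P[bs _ _]]; first exact: inCi.
    by rewrite /Defs.inC bs orbT.
  by rewrite HcondE divr_ge0 // L_ge0.
split; first exact: Hsolve. split; first exact: Hnn.
move=> G HG _.
have interior : forall s', s' \in Cb -> forall s, s \in Ci ->
    Cprime P Gam pi Ci Cb s' s -> HH s s' = G s s'.
  move=> s' bs'.
  pose I := fun y => (y \in Ci) && Cprime P Gam pi Ci Cb s' y.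
  pose Dif := fun y => HH y s' - G y s'.
  have Drec : forall s, I s ->
      Dif s = \sum_(y | I y) \sum_a Ph P Gam pi Ci Cb s' s a y * Gam s a y * Dif y.
    move=> s /andP[si cp]; rewrite /Dif (Hsolve.1 s s' bs' si cp) (HG.1 s s' bs' si cp).
    rewrite /sysRHS opprD addrACA subrr addr0 -sumrB; apply: eq_bigr => y _.
    by rewrite -sumrB; apply: eq_bigr => a _; rewrite -mulrBr.
  have Phge0 : forall s a y, I s -> I y -> 0 <= Ph P Gam pi Ci Cb s' s a y.
    move=> s a y /andP[si cp] /andP[yi cpy]; rewrite /Ph.
    move: cp cpy; rewrite /Cprime => /andP[_ hs] /andP[_ hy].
    apply: divr_ge0; last exact: ltW.
    apply: mulr_ge0; last exact: ltW.
    exact: mulr_ge0 (PC_ge0 _ _ _) (Hpi0 _ _ (inCi _ si)).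
  have Phsum : forall s, I s -> \sum_(y | I y) \sum_a Ph P Gam pi Ci Cb s' s a y <= 1.
    move=> s /andP[si cp].
    have Cs := inCi _ si.
    have Lpos : 0 < L false s s' by move: cp; rewrite /Cprime Cs (hE s' s (HD s si)).
    have Dn0 : L false s s' != 0 by rewrite gt_eqF.
    have -> : \sum_(y | I y) \sum_a Ph P Gam pi Ci Cb s' s a y =
        (\sum_(y | I y) \sum_a w false s a y * L false y s') / L false s s'.
      rewrite big_distrl; apply: eq_bigr => y /andP[yi _].
      rewrite big_distrl; apply: eq_bigr => a _.
      rewrite /Ph (hE s' s (HD s si)) (hE s' y (HD y yi)) /stepw /=; field.
      exact: Dn0.
    rewrite ler_pdivrMr // mul1r [X in _ <= X](L_rec false _ _ Cs bs').
    apply: (@le_trans _ _ (\sum_a \sum_(y in Ci) w false s a y * L false y s')); last first.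
      rewrite lerDr; apply: sumr_ge0 => a _; exact: w_ge0.
    rewrite [X in _ <= X]exchange_big /= big_mkcond [X in _ <= X]big_mkcond /=.
    apply: ler_sum => y _; rewrite /I; case: (boolP (y \in Ci)) => yi //=.
    case: ifP => _ //; apply: sumr_ge0 => a _; apply: mulr_ge0; first exact: w_ge0.
    by apply: L_ge0 => //; exact: inCi.
  pose g := \big[Order.max/0]_(x : S * A * S) Gam x.1.1 x.1.2 x.2.
  have Gle : forall s a y, Gam s a y <= g.
    move=> s a y.
    exact: (@le_bigmax_cond _ _ _ 0 (s, a, y) xpredT (fun x : S * A * S => Gam x.1.1 x.1.2 x.2) isT).
  have glt1 : g < 1.
    apply: bigmax_lt => //.
    by move=> x _; case/andP: (HGam x.1.1 x.1.2 x.2).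
  have g0 : 0 <= g by apply: max0_ge.
  pose m := \big[Order.max/0]_(y | I y) `|Dif y|.
  have mge : forall y, I y -> `|Dif y| <= m.
    by move=> y Iy; exact: (@le_bigmax_cond _ _ _ 0 y I (fun y => `|Dif y|) Iy).
  have m0' : 0 <= m by apply: max0_ge.
  have bnd : forall s, I s -> `|Dif s| <= g * m.
    move=> s Is; rewrite Drec //; apply: le_trans (ler_norm_sum _ _ _) _.
    apply: (@le_trans _ _ (\sum_(y | I y) \sum_a Ph P Gam pi Ci Cb s' s a y * (g * m))).
      apply: ler_sum => y Iy; apply: le_trans (ler_norm_sum _ _ _) _; apply: ler_sum => a _.
      have Gp : 0 <= Gam s a y by case/andP: (HGam s a y) => /ltW.
      have Pq := Phge0 s a y Is Iy; move: Pq; set q := Ph _ _ _ _ _ s' s a y => Pq; clearbody q.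
      rewrite !normrM (ger0_norm Pq) (ger0_norm Gp) -mulrA.
      apply: ler_wpM2l; first exact: Pq.
      by apply: ler_pM; [exact: Gp|exact: normr_ge0|exact: Gle|exact: mge].
    under eq_bigr do rewrite -big_distrl.
    rewrite -big_distrl /= -[X in _ <= X]mul1r; apply: ler_wpM2r.
      exact: mulr_ge0.
    exact: Phsum.
  have mle : m <= g * m.
    by apply: bigmax_le; [exact: mulr_ge0 | move=> y Iy; exact: bnd].
  have m0 : m <= 0 by nra.
  move=> s si cp; apply/eqP; rewrite -subr_eq0 -normr_le0.
  apply: le_trans m0; apply: (mge s); exact/andP.
move=> s s' /andP[bs' /orP[/andP[si cp]|sp]]; first by rewrite (interior s' bs' s si cp).
rewrite (Hsolve.2 s s' sp) (HG.2 s s' sp) /sysRHS; apply: lerD; last exact: lexx.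
apply: ler_sum => y /andP[yi cp]; apply: ler_sum => a _.
by rewrite (interior s' bs' y yi cp).
Qed.

End MDP.

Theorem proposition3 (R : realType) (S A : finType)
  (P : S -> A -> S -> R) (Gam : S -> A -> S -> R) (pi : S -> A -> R)
  (B Ci Cb : {set S})
  (HP0 : forall s a s', 0 <= P s a s')
  (HP1 : forall s a, \sum_(s' : S) P s a s' = 1)
  (HGam : forall s a s', 0 < Gam s a s' < 1)
  (Hpi0 : forall s a, inC Ci Cb s -> 0 <= pi s a)
  (Hpi1 : forall s, inC Ci Cb s -> \sum_(a : A) pi s a = 1)
  (HCi : Ci \subset ~: B) (HCb : Cb \subset B)
  (Hreach : pi_reachable P pi Ci Cb) :
  minNonnegSol P Gam pi Ci Cb (Hcond P Gam pi Ci Cb).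
Proof.
apply: main => // s si; apply/negP => sb.
by move: (fintype.subsetP HCi s si); rewrite inE (fintype.subsetP HCb s sb).
Qed.
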